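(* The logic $\mathbf{EKPC}$ is sound and complete with respect to the class of all serial propositional Kripke models: for every finite set $\Gamma$ and formula $A$ of the propositional language, $\Gamma\vdash_{\mathbf{EKPC}}A$ iff $\Gamma\Rightarrow A$ is valid in every propositional Kripke model $(W,R,V)$ with $R$ serial.
   Context: The propositional language $\mathcal{L}_p$ has variables, constants $\top,\bot$ and connectives $\wedge,\vee,\to$. Judgements are $\Gamma\vdash A$ with $\Gamma$ a finite set of formulas. $\mathbf{KPC}$ is given by the natural-deduction assumption rule ($\Gamma\vdash A$ for $A\in\Gamma$) and the rules (premises / conclusion): $\Gamma\vdash\top$; $\Gamma\vdash\bot$ / $\Gamma\vdash A$; $\vee E$: $\Gamma\vdash A\vee B$, $\Gamma,A\vdash C$, $\Gamma,B\vdash C$ / $\Gamma\vdash C$; $\vee I$: $\Gamma\vdash A_i$ / $\Gamma\vdash A_0\vee A_1$ ($i=0,1$); $\wedge E$: $\Gamma\vdash A_0\wedge A_1$ / $\Gamma\vdash A_i$; $\wedge I$: $\Gamma\vdash A$, $\Gamma\vdash B$ / $\Gamma\vdash A\wedge B$; $\to I$: $A\vdash B$ / $\Gamma\vdash A\to B$; $(\wedge I)_f$: $\Gamma\vdash A\to B$, $\Gamma\vdash A\to C$ / $\Gamma\vdash A\to B\wedge C$; $(\vee E)_f$: $\Gamma\vdash A\to C$, $\Gamma\vdash B\to C$ / $\Gamma\vdash A\vee B\to C$; $tr_f$: $\Gamma\vdash A\to B$, $\Gamma\vdash B\to C$ / $\Gamma\vdash A\to C$. $\mathbf{EKPC}$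 is $\mathbf{KPC}$ plus the rule $E$: $\Gamma\vdash\top\to\bot$ / $\Gamma\vdash\bot$. A propositional Kripke model is $(W,R,V)$ with $W$ a set, $R\subseteq W\times W$ arbitrary, and $V$ assigning a subset of $W$ to each variable; forcing: $w\Vdash p$ iff $w\in V(p)$, $\top$ always, $\bot$ never, $\wedge,\vee$ pointwise, $w\Vdash A\to B$ iff for all $v$ with $(w,v)\in R$, $v\Vdash A$ implies $v\Vdash B$. $\Gamma\Rightarrow A$ is valid in the model if every $w$ forcing all of $\Gamma$ forces $A$. $R$ is serial if every $u$ has some $v$ with $(u,v)\in R$. *)

(* Defs.v *)
From Stdlib Require Import List.
Import ListNotations.

Inductive form : Type :=
| Var : nat -> form
| Top : form
| Bot : form
| And : form -> form -> form
| Or  : form -> form -> form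
| Imp : form -> form -> form.

(* Finite sets of formulas are represented by lists; membership is [In].
   "Gamma, A" is [A :: Gamma]. *)

Inductive EKPC : list form -> form -> Prop :=
| ax     : forall G A, In A G -> EKPC G A
| topI   : forall G, EKPC G Top
| botE   : forall G A, EKPC G Bot -> EKPC G A
| orE    : forall G A B C, EKPC G (Or A B) -> EKPC (A :: G) C -> EKPC (B :: G) C -> EKPC G C
| orI0   : forall G A B, EKPC G A -> EKPC G (Or A B)
| orI1   : forall G A B, EKPC G B -> EKPC G (Or A B)
| andE0  : forall G A B, EKPC G (And A B) -> EKPC G A
| andE1  : forall G A B, EKPC G (And A B) -> EKPC G B
| andI   : forall G A B, EKPC G A -> EKPC G B -> EKPC G (And A B)
| impI   : forall G A B, EKPC [A] B -> EKPC G (Imp A B)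
| andIf  : forall G A B C, EKPC G (Imp A B) -> EKPC G (Imp A C) -> EKPC G (Imp A (And B C))
| orEf   : forall G A B C, EKPC G (Imp A C) -> EKPC G (Imp B C) -> EKPC G (Imp (Or A B) C)
| trf    : forall G A B C, EKPC G (Imp A B) -> EKPC G (Imp B C) -> EKPC G (Imp A C)
| ruleE  : forall G, EKPC G (Imp Top Bot) -> EKPC G Bot.

Record model : Type := {
  world : Type;
  acc : world -> world -> Prop;
  val : nat -> world -> Prop
}.

Fixpoint forces (M : model) (w : world M) (A : form) : Prop :=
  match A with
  | Var p => val M p w
  | Top => True
  | Bot => False
  | And B C => forces M w B /\ forces M w C
  | Or B C => forces M w B \/ forces M w C
  | Imp B C => forall v, acc M w v -> forces M v B -> forces M v C
  end.

Definition valid_in (M : model) (G : list form) (A : form) : Prop :=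
  forall w : world M, (forall B, In B G -> forces M w B) -> forces M w A.

Definition serial (M : model) : Prop :=
  forall u : world M, exists v, acc M u v.

(* Main.v *)
Require Import Defs.
From Stdlib Require Import List.
From Stdlib Require Import Classical ClassicalEpsilon Lia Cantor.
Import ListNotations.

Lemma weak : forall G X, EKPC G X -> forall H, (forall B, In B G -> In B H) -> EKPC H X.
Proof.
  induction 1; intros K Hi; try (econstructor; eauto; fail).
  - apply (orE K A B C); [apply IHEKPC1; exact Hi| apply IHEKPC2 | apply IHEKPC3];
      intros b [->|Hb]; simpl; auto.
Qed.

Lemma subst : forall G X, EKPC G X -> forall H, (forall B, In B G -> EKPC H B) -> EKPC H X.
Proof.
  induction 1; intros K Hi; try (econstructor; eauto; fail); try (auto; fail).
  - apply (orE K A B C); [apply IHEKPC1; exact Hi| apply IHEKPC2 | apply IHEKPC3];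
      intros b [->|Hb]; [apply ax; simpl; auto| |apply ax; simpl; auto|];
      apply (weak _ _ (Hi b Hb)); simpl; auto.
Qed.

Fixpoint bigand (L : list form) : form :=
  match L with [] => Top | X :: L' => And X (bigand L') end.

Lemma conj_in : forall L H B, EKPC H (bigand L) -> In B L -> EKPC H B.
Proof.
  induction L; simpl; intros H B D Hi; [destruct Hi|destruct Hi as [<-|Hi]].
  - eapply andE0; eauto.
  - eapply IHL; [eapply andE1; eauto| auto].
Qed.

Lemma conj_self : forall G, EKPC G (bigand G).
Proof.
  induction G; simpl. apply topI. apply andI. apply ax; simpl; auto.
  eapply weak; [exact IHG|]. simpl; auto.
Qed.

Lemma conj_der : forall L X, EKPC L X -> EKPC [bigand L] X.
Proof.
  intros L X D. eapply subst; [exact D|]. intros B Hb.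
  eapply conj_in; [apply ax; simpl; auto| exact Hb].
Qed.

Lemma soundness : forall G A, EKPC G A -> forall M, serial M -> valid_in M G A.
Proof.
  induction 1; intros M HM w Hw; unfold valid_in in *; simpl in *.
  - auto.
  - auto.
  - destruct (IHEKPC M HM w Hw).
  - destruct (IHEKPC1 M HM w Hw) as [Ha|Hb].
    + apply (IHEKPC2 M HM w); intros b [->|Hb]; auto.
    + apply (IHEKPC3 M HM w); intros b [->|Hb']; auto.
  - left; eauto.
  - right; eauto.
  - apply (IHEKPC M HM w Hw).
  - apply (IHEKPC M HM w Hw).
  - split; eauto.
  - intros v _ Hv. apply (IHEKPC M HM v). intros b [->|[]]; auto.
  - intros v Hr Hv. split; [apply (IHEKPC1 M HM w Hw) | apply (IHEKPC2 M HM w Hw)]; auto.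
  - intros v Hr [Hv|Hv]; [apply (IHEKPC1 M HM w Hw) | apply (IHEKPC2 M HM w Hw)]; auto.
  - intros v Hr Hv. apply (IHEKPC2 M HM w Hw); auto. apply (IHEKPC1 M HM w Hw); auto.
  - destruct (HM w) as [v Hv]. exact (IHEKPC M HM w Hw v Hv I).
Qed.

Fixpoint enc (A : form) : nat :=
  match A with
  | Var p => to_nat (0, p)
  | Top => to_nat (1, 0)
  | Bot => to_nat (2, 0)
  | And a b => to_nat (3, to_nat (enc a, enc b))
  | Or a b => to_nat (4, to_nat (enc a, enc b))
  | Imp a b => to_nat (5, to_nat (enc a, enc b))
  end.

Lemma to_nat_inj : forall p q, to_nat p = to_nat q -> p = q.
Proof. intros p q H. rewrite <- (cancel_of_to p), <- (cancel_of_to q), H. reflexivity. Qed.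

Lemma enc_inj : forall A B, enc A = enc B -> A = B.
Proof.
  induction A; destruct B; intro H; cbn [enc] in H; apply to_nat_inj in H;
  try discriminate H; try reflexivity;
  try (injection H as E; subst; reflexivity);
  apply (f_equal snd) in H; cbn [snd] in H; apply to_nat_inj in H as E; injection E as E1 E2; f_equal; auto.
Qed.

Section PFT.
Variable P : form -> form -> Prop.
Hypothesis Prefl : forall X, P X X.
Hypothesis Ptrans : forall X Y Z, P X Y -> P Y Z -> P X Z.
Hypothesis Pm0 : forall X Y, P (And X Y) X.
Hypothesis Pm1 : forall X Y, P (And X Y) Y.
Hypothesis PmI : forall Z X Y, P Z X -> P Z Y -> P Z (And X Y).
Hypothesis Ptop : forall X, P X Top.
Hypothesis PorE : forall X Y Z, P X Z -> P Y Z -> P (Or X Y) Z.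
Hypothesis Pdist : forall X C D, P (And X (Or C D)) (Or (And X C) (And X D)).

Variable A B : form.
Hypothesis nAB : ~ P A B.

Definition step (n : nat) (c : form) : form :=
  match excluded_middle_informative (exists f, enc f = n /\ ~ P (And c f) B) with
  | left H => And c (proj1_sig (constructive_indefinite_description _ H))
  | right _ => c
  end.

Fixpoint ch (n : nat) : form :=
  match n with 0 => A | S n => step n (ch n) end.

Lemma ch_ok : forall n, ~ P (ch n) B.
Proof.
  induction n; simpl; auto. unfold step.
  destruct excluded_middle_informative as [H|H]; auto.
  destruct constructive_indefinite_description as [f [Hf1 Hf]]; simpl; auto.
Qed.

Lemma ch_step : forall n, P (ch (S n)) (ch n).
Proof.
  intro n; simpl; unfold step.
  destruct excluded_middle_informative as [H|H]; auto.
Qed.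

Lemma ch_mono : forall n m, n <= m -> P (ch m) (ch n).
Proof.
  intros n m Hle; induction Hle; auto. eapply Ptrans; [apply ch_step| auto].
Qed.

Definition Th (Y : form) : Prop := exists n, P (ch n) Y.

Lemma ch_rej : forall C, ~ Th C -> P (And (ch (enc C)) C) B.
Proof.
  intros C HC. apply NNPP; intro Hn. apply HC. exists (S (enc C)).
  simpl; unfold step.
  destruct excluded_middle_informative as [H|H].
  - destruct constructive_indefinite_description as [f [Hf Hf2]]; simpl.
    apply enc_inj in Hf; subst; auto.
  - exfalso; apply H; eauto.
Qed.

Lemma Th_prime : forall C D, Th (Or C D) -> Th C \/ Th D.
Proof.
  intros C D [k Hk]. apply NNPP; intro Hn.
  apply not_or_and in Hn as [HC HD].
  apply ch_rej in HC; apply ch_rej in HD.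
  set (m := enc C + enc D + k).
  apply (ch_ok m).
  assert (H1 : P (And (ch m) C) B).
  { eapply Ptrans; [|exact HC]. apply PmI; auto. eapply Ptrans; [apply Pm0|]. apply ch_mono; unfold m; lia. }
  assert (H2 : P (And (ch m) D) B).
  { eapply Ptrans; [|exact HD]. apply PmI; auto. eapply Ptrans; [apply Pm0|]. apply ch_mono; unfold m; lia. }
  eapply Ptrans; [|eapply Ptrans; [apply Pdist| apply PorE; [exact H1| exact H2]]].
  apply PmI; auto. eapply Ptrans; [|exact Hk]. apply ch_mono; unfold m; lia.
Qed.

Lemma pft : exists W : form -> Prop,
  (forall X Y, W X -> P X Y -> W Y) /\
  (forall X Y, W X -> W Y -> W (And X Y)) /\
  W Top /\
  (forall C D, W (Or C D) -> W C \/ W D) /\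
  W A /\ ~ W B.
Proof.
  exists Th. repeat split.
  - intros X Y [n Hn] HP. exists n; eauto.
  - intros X Y [n Hn] [m Hm]. exists (n + m). apply PmI.
    + eapply Ptrans; [|exact Hn]. apply ch_mono; lia.
    + eapply Ptrans; [|exact Hm]. apply ch_mono; lia.
  - exists 0; auto.
  - apply Th_prime.
  - exists 0; simpl; auto.
  - intros [n Hn]. exact (ch_ok n Hn).
Qed.
End PFT.

Definition closedT (W : form -> Prop) :=
  forall L X, (forall b, In b L -> W b) -> EKPC L X -> W X.
Definition isWorld (W : form -> Prop) :=
  closedT W /\ (forall C D, W (Or C D) -> W C \/ W D) /\ ~ W Bot.

Definition canon : model := {|
  world := { W : form -> Prop | isWorld W };
  acc := fun u v => forall X Y, proj1_sig u (Imp X Y) -> proj1_sig v X -> proj1_sig v Y;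
  val := fun p w => proj1_sig w (Var p) |}.

Lemma bigand_mem : forall (W : form -> Prop), (forall X Y, W X -> W Y -> W (And X Y)) -> W Top ->
  forall L, (forall b, In b L -> W b) -> W (bigand L).
Proof.
  intros W HA HT; induction L; simpl; auto.
Qed.

Lemma thm_in : forall W, closedT W -> forall X, EKPC [] X -> W X.
Proof. intros W HW X D. apply (HW [] X); auto. intros b []. Qed.

Lemma succ_exists : forall (W : form -> Prop), isWorld W -> forall X Y, ~ W (Imp X Y) ->
  exists V, isWorld V /\ (forall U Z, W (Imp U Z) -> V U -> V Z) /\ V X /\ ~ V Y.
Proof.
  intros W [HWc [HWp HWb]] X Y HXY.
  set (P := fun U Z => W (Imp U Z)).
  assert (Hth : forall U Z, EKPC [U] Z -> P U Z).
  { intros U Z D. unfold P. apply thm_in; [exact HWc| apply impI; exact D]. }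
  assert (H2 : forall U V Z Z1 Z2, P U Z1 -> P V Z2 ->
     EKPC [Imp U Z1; Imp V Z2] Z -> W Z).
  { intros U V Z Z1 Z2 H1 H2 D. apply (HWc [Imp U Z1; Imp V Z2] Z); [|exact D].
    intros b [<-|[<-|[]]]; auto. }
  destruct (pft P) with (A := X) (B := Y) as [V [Vup [Vand [Vtop [Vpr [VX VY]]]]]]; auto.
  - intro; apply Hth; apply ax; simpl; auto.
  - intros a b c H1 H3. eapply (H2 a b); [exact H1|exact H3|].
    eapply trf; apply ax; simpl; auto.
  - intros; apply Hth. eapply andE0; apply ax; simpl; auto.
  - intros; apply Hth. eapply andE1; apply ax; simpl; auto.
  - intros a b c H1 H3. eapply (H2 a a); [exact H1|exact H3|].
    eapply andIf; apply ax; simpl; auto.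
  - intros; apply Hth; apply topI.
  - intros a b c H1 H3. eapply (H2 a b); [exact H1|exact H3|].
    eapply orEf; apply ax; simpl; auto.
  - intros; apply Hth.
    eapply orE; [eapply andE1; apply ax; simpl; auto| |].
    + apply orI0. apply andI; [eapply andE0; apply ax; simpl; auto| apply ax; simpl; auto].
    + apply orI1. apply andI; [eapply andE0; apply ax; simpl; auto| apply ax; simpl; auto].
  - exists V. repeat split; auto.
    + intros L Z HL D. apply (Vup (bigand L)); [apply bigand_mem; eauto|].
      apply Hth. apply conj_der; auto.
    + intro HB. apply VY. eapply Vup; [exact HB|]. apply Hth. apply botE, ax; simpl; auto.
    + intros U Z H1 H3. exact (Vup U Z H3 H1).
Qed.

Lemma truth : forall A (w : world canon), forces canon w A <-> proj1_sig w A.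
Proof.
  induction A; intros [W [Hc [Hp Hb]]]; simpl in *.
  - tauto.
  - split; auto. intros _. apply thm_in; auto. apply topI.
  - tauto.
  - rewrite (IHA1 (exist _ W (conj (Hc) (conj Hp Hb)))), (IHA2 (exist _ W (conj Hc (conj Hp Hb)))); simpl.
    split.
    + intros [H1 H2]. apply (Hc [A1; A2]); [intros b [<-|[<-|[]]]; auto|].
      apply andI; apply ax; simpl; auto.
    + intro H; split; apply (Hc [And A1 A2]); try (intros b [<-|[]]; auto);
        [eapply andE0| eapply andE1]; apply ax; simpl; auto.
  - rewrite (IHA1 (exist _ W (conj (Hc) (conj Hp Hb)))), (IHA2 (exist _ W (conj Hc (conj Hp Hb)))); simpl.
    split.
    + intros [H|H]; [apply (Hc [A1])|apply (Hc [A2])]; try (intros b [<-|[]]; exact H);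
        [apply orI0| apply orI1]; apply ax; simpl; auto.
    + apply Hp.
  - split.
    + intro H. apply NNPP; intro Hn.
      destruct (succ_exists W (conj Hc (conj Hp Hb)) A1 A2 Hn) as [V [HV [Hacc [V1 V2]]]].
      apply V2. apply (IHA2 (exist _ V HV)). apply H; simpl.
      * exact Hacc.
      * apply (IHA1 (exist _ V HV)); exact V1.
    + intros H v Hr Hv. apply IHA2. apply Hr with A1; [exact H|]. apply IHA1; exact Hv.
Qed.

Lemma canon_serial : serial canon.
Proof.
  intros [W HW]. destruct (succ_exists W HW Top Bot) as [V [HV [Hacc _]]].
  - intro H. destruct HW as [Hc [_ Hb]]. apply Hb. apply (Hc [Imp Top Bot]); [intros b [<-|[]]; auto|].
    apply ruleE, ax; simpl; auto.
  - exists (exist _ V HV). exact Hacc.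
Qed.

Lemma completeness : forall G A, ~ EKPC G A -> exists w : world canon,
  (forall B, In B G -> forces canon w B) /\ ~ forces canon w A.
Proof.
  intros G A HGA.
  set (P := fun U Z => EKPC [U] Z).
  destruct (pft P) with (A := bigand G) (B := A) as [V [Vup [Vand [Vtop [Vpr [VX VY]]]]]].
  - intro; apply ax; simpl; auto.
  - intros a b c H1 H3. eapply subst; [exact H3|]. intros x [<-|[]]; auto.
  - intros; eapply andE0; apply ax; simpl; auto.
  - intros; eapply andE1; apply ax; simpl; auto.
  - intros; apply andI; auto.
  - intros; apply topI.
  - intros a b c H1 H3. apply (orE [Or a b] a b c); [apply ax; simpl; auto| |].
    + apply (weak _ _ H1); intros x [<-|[]]; simpl; auto.
    + apply (weak _ _ H3); intros x [<-|[]]; simpl; auto.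
  - intros. eapply orE; [eapply andE1; apply ax; simpl; auto| |].
    + apply orI0. apply andI; [eapply andE0; apply ax; simpl; auto| apply ax; simpl; auto].
    + apply orI1. apply andI; [eapply andE0; apply ax; simpl; auto| apply ax; simpl; auto].
  - intro H. apply HGA. eapply subst; [exact H|]. intros x [<-|[]].
    apply conj_self.
  - assert (HV : isWorld V).
    { repeat split; auto.
      - intros L Z HL D. apply (Vup (bigand L)); [apply bigand_mem; eauto|]. apply conj_der; auto.
      - intro HB. apply VY. eapply Vup; [exact HB|]. apply botE, ax; simpl; auto. }
    exists (exist _ V HV). split.
    + intros b Hb. apply truth; simpl. eapply Vup; [exact VX|].
      eapply conj_in; [apply ax; simpl; auto| exact Hb].
    + rewrite truth; simpl; exact VY.
Qed.

Theorem theorem9p3 : forall (G : list form) (A : form),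
  EKPC G A <-> (forall M : model, serial M -> valid_in M G A).
Proof.
  intros G A; split.
  - intros D M HM. exact (soundness G A D M HM).
  - intro H. apply NNPP; intro Hn.
    destruct (completeness G A Hn) as [w [Hw Hnw]].
    exact (Hnw (H canon canon_serial w Hw)).
Qed.
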